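(* Let $\Lambda\subseteq[0,\infty]$ with $0\in\Lambda$. Suppose $\pi$ is convex and there are constants $c_m>0$, $C_{\ell,3}<\infty$ such that: for all $i\in[n]$ and $\lambda\in\Lambda$, $m(P_{-i},\cdot,\lambda)$ has $\nu(r)=c_mr^2$ gradient growth; $\mathrm{Lip}(\nabla^2_\beta\ell(P_{-i},\cdot))\le C_{\ell,3}$ for all $i\in[n]$; and $B_{s,r}<\infty$ for each $(s,r)\in\{(0,3),(1,3),(1,4)\}$. Then for all $\lambda\in\Lambda$, $$|\mathrm{ProxACV}(\lambda)-\mathrm{CV}(\lambda)|\le\frac{C_{\ell,3}}{n^2}\Big(\frac{B_{0,3}}{2c_m^3}+\frac{B_{1,3}}{2nc_m^4}+\frac{C_{\ell,3}B_{1,4}}{8n^2c_m^6}\Big).$$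
   Context: Data $z_1,\dots,z_n\in\mathcal Z$; loss $\ell:\mathcal Z\times\mathbb{R}^d\to\mathbb{R}$ (sufficiently differentiable in $\beta$), regularizer $\pi:\mathbb{R}^d\to\mathbb{R}$ (possibly non-smooth). $\ell(\mu,\beta):=\int\ell(z,\beta)d\mu(z)$, $m(\mu,\beta,\lambda):=\ell(\mu,\beta)+\lambda\pi(\beta)$; $P_n:=\frac1n\sum_i\delta_{z_i}$, $P_{-i}:=\frac1n\sum_{j\ne i}\delta_{z_j}$. $\hat\beta(\lambda):=\arg\min_\beta m(P_n,\beta,\lambda)$ ($\lambda<\infty$), $\hat\beta(\infty):=\arg\min\pi$; $\hat\beta_{-i}(\lambda):=\arg\min_\beta m(P_{-i},\beta,\lambda)$; $\mathrm{CV}(\lambda):=\frac1n\sum_i\ell(z_i,\hat\beta_{-i}(\lambda))$. With $H_{\ell,i}:=\nabla^2_\beta\ell(P_{-i},\hat\beta(\lambda))$ and $g_{\ell,i}:=\nabla_\beta\ell(P_{-i},\hat\beta(\lambda))$, define $\hat\beta^{\mathrm{prox}}_{-i}(\lambda):=\arg\min_{\beta}\frac12\|\hat\beta(\lambda)-\beta\|_{H_{\ell,i}}^2+\beta^\top g_{\ell,i}+\lambda\pi(\beta)$ (with $\|v\|_H^2:=v^\top Hv$), and $\mathrm{ProxACV}(\lambda):=\frac1n\sum_i\ell(z_i,\hat\beta^{\mathrm{prox}}_{-i}(\lambda))$. $\|H\|_{op}:=\sup_{v\ne0}\|H[v]\|_{op}/\|v\|_2$; $\mathrm{Lip}(f):=\sup_{x\ne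 y}\|f(x)-f(y)\|_{op}/\|x-y\|_2$. $B_{s,r}:=\sup_{\lambda\in\Lambda}\frac1n\sum_i\mathrm{Lip}(\nabla_\beta\ell(z_i,\cdot))^s\|\nabla_\beta\ell(z_i,\hat\beta(\lambda))\|_2^r$. $\varphi$ has $\nu$ gradient growth if subdifferentiable and $\nu(\|x-y\|_2)\le\langle y-x,u-v\rangle$ for all $x,y$, $u\in\partial\varphi(y)$, $v\in\partial\varphi(x)$. *)

(* Defs.v *)
From HB Require Import structures.
From mathcomp Require Import all_boot all_order all_algebra.
From mathcomp Require Import all_classical all_reals all_analysis.
Set Implicit Arguments. Unset Strict Implicit. Unset Printing Implicit Defensive.
Import Order.TTheory GRing.Theory Num.Theory.
Import numFieldNormedType.Exports.
Local Open Scope classical_set_scope.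
Local Open Scope ring_scope.

Section Geometry.
Context {R : realType} {d : nat}.
Local Notation vec := 'cV[R]_d.

Definition ev (j : 'I_d) : vec := delta_mx j 0.
Definition dot (u v : vec) : R := \sum_j u j 0 * v j 0.
Definition l2 (v : vec) : R := Num.sqrt (dot v v).

Definition grad (f : vec -> R) (x : vec) : vec := \col_j ('D_(ev j) f x).
Definition jac (G : vec -> vec) (x : vec) : 'M[R]_d :=
  \matrix_(j, k) (('D_(ev k) G x) j 0).
Definition hess (f : vec -> R) (x : vec) : 'M[R]_d := jac (grad f) x.

Definition opnorm (A : 'M[R]_d) : R :=
  sup [set r | exists v : vec, v != 0 /\ r = l2 (A *m v) / l2 v].

Definition LipV (G : vec -> vec) : \bar R :=
  ereal_sup [set r | exists x y : vec, x != y /\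
                       r = (l2 (G x - G y) / l2 (x - y))%:E].
Definition LipM (H : vec -> 'M[R]_d) : \bar R :=
  ereal_sup [set r | exists x y : vec, x != y /\
                       r = (opnorm (H x - H y) / l2 (x - y))%:E].

Definition convex_fun (f : vec -> R) : Prop :=
  forall x y (t : R), 0 <= t -> t <= 1 ->
    f (t *: x + (1 - t) *: y) <= t * f x + (1 - t) * f y.

Definition subdiff (phi : vec -> R) (x : vec) : set vec :=
  [set u | forall y, phi x + dot u (y - x) <= phi y].

Definition grad_growth (nu : R -> R) (phi : vec -> R) : Prop :=
  (forall x, subdiff phi x !=set0) /\
  (forall x y u v, subdiff phi y u -> subdiff phi x v ->
     nu (l2 (x - y)) <= dot (y - x) (u - v)).

Definition is_argmin (f : vec -> R) (x : vec) : Prop := forall y, f x <= f y.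

End Geometry.

Section Model.
Context {R : realType} {d n : nat} {Z : Type}.
Local Notation vec := 'cV[R]_d.
Variables (z : 'I_n -> Z) (ell : Z -> vec -> R) (pi : vec -> R).

(* l(P_n, b) and l(P_{-i}, b) (both with weight 1/n) *)
Definition lossPn (b : vec) : R := n%:R^-1 * \sum_(j < n) ell (z j) b.
Definition lossPm (i : 'I_n) (b : vec) : R :=
  n%:R^-1 * \sum_(j < n | j != i) ell (z j) b.

Definition mPn (lam : R) (b : vec) : R := lossPn b + lam * pi b.
Definition mPm (i : 'I_n) (lam : R) (b : vec) : R := lossPm i b + lam * pi b.

Definition prox_obj (bh : vec) (i : 'I_n) (lam : R) (b : vec) : R :=
  2^-1 * dot (bh - b) (hess (lossPm i) bh *m (bh - b))
  + dot b (grad (lossPm i) bh) + lam * pi b.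

Definition CV (bm : 'I_n -> R -> vec) (lam : R) : R :=
  n%:R^-1 * \sum_(i < n) ell (z i) (bm i lam).
Definition ProxACV (bp : 'I_n -> R -> vec) (lam : R) : R :=
  n%:R^-1 * \sum_(i < n) ell (z i) (bp i lam).

(* B_{s,r} (in the extended reals; Lip^s computed in \bar R, 0 * +oo = 0) *)
Definition Bsr (Lam : set R) (bh : R -> vec) (s r : nat) : \bar R :=
  ereal_sup [set ((n%:R^-1)%:E *
      \sum_(i < n) (iter s (fun e => LipV (grad (ell (z i))) * e) 1
                     * ((l2 (grad (ell (z i)) (bh lam))) ^+ r)%:E))%E
    | lam in Lam].

End Model.

(* Main.v *)
Require Import Defs.
From HB Require Import structures.
From mathcomp Require Import all_boot all_order all_algebra.
From mathcomp Require Import all_classical all_reals all_analysis.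
From mathcomp Require Import ring lra.
Set Implicit Arguments. Unset Strict Implicit. Unset Printing Implicit Defensive.
Import Order.TTheory GRing.Theory Num.Theory.
Import numFieldNormedType.Exports.
Local Open Scope classical_set_scope.
Local Open Scope ring_scope.

Section Dot.
Context {R : realType} {d : nat}.
Local Notation vec := 'cV[R]_d.
Implicit Types u v w : vec.

Lemma dotC u v : dot u v = dot v u.
Proof. by apply: eq_bigr => j _; rewrite mulrC. Qed.
Lemma dotDl u v w : dot (u + v) w = dot u w + dot v w.
Proof. by rewrite /dot -big_split; apply: eq_bigr => j _; rewrite !mxE mulrDl. Qed.
Lemma dotDr u v w : dot w (u + v) = dot w u + dot w v.
Proof. by rewrite dotC dotDl !(dotC w). Qed.
Lemma dotZl (a : R) u v : dot (a *: u) v = a * dot u v.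
Proof. by rewrite /dot mulr_sumr; apply: eq_bigr => j _; rewrite !mxE mulrA. Qed.
Lemma dotZr (a : R) u v : dot u (a *: v) = a * dot u v.
Proof. by rewrite dotC dotZl dotC. Qed.
Lemma dotNl u v : dot (- u) v = - dot u v.
Proof. by rewrite -scaleN1r dotZl mulN1r. Qed.
Lemma dotNr u v : dot u (- v) = - dot u v.
Proof. by rewrite dotC dotNl dotC. Qed.
Lemma dotBl u v w : dot (u - v) w = dot u w - dot v w.
Proof. by rewrite dotDl dotNl. Qed.
Lemma dotBr u v w : dot w (u - v) = dot w u - dot w v.
Proof. by rewrite dotDr dotNr. Qed.
Lemma dot0l v : dot 0 v = 0.
Proof. by rewrite /dot big1 // => j _; rewrite mxE mul0r. Qed.
Lemma dot0r v : dot v 0 = 0.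
Proof. by rewrite dotC dot0l. Qed.
Lemma dot_ge0 v : 0 <= dot v v.
Proof. by apply: sumr_ge0 => j _; rewrite -expr2 sqr_ge0. Qed.
Lemma dot_eq0 v : dot v v = 0 -> v = 0.
Proof.
move=> /eqP; rewrite psumr_eq0 => [/allP H|j _]; last by rewrite -expr2 sqr_ge0.
apply/matrixP => i j; rewrite (ord1 j) mxE.
have := H i (mem_index_enum _); rewrite -expr2 sqrf_eq0 => /eqP //.
Qed.
Lemma l2_ge0 v : 0 <= l2 v.
Proof. exact: sqrtr_ge0. Qed.
Lemma l2_sq v : l2 v ^+ 2 = dot v v.
Proof. by rewrite sqr_sqrtr // dot_ge0. Qed.
Lemma l2_0 : l2 (0 : vec) = 0.
Proof. by rewrite /l2 dot0l sqrtr0. Qed.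
Lemma l2_eq0 v : l2 v = 0 -> v = 0.
Proof. by move=> h; apply: dot_eq0; rewrite -l2_sq h expr0n. Qed.
Lemma l2_gt0 v : v != 0 -> 0 < l2 v.
Proof. by move=> nz; rewrite lt_def l2_ge0 andbT; apply/eqP => /l2_eq0 /eqP; apply/negP. Qed.
Lemma l2Z (a : R) v : l2 (a *: v) = `|a| * l2 v.
Proof. by rewrite /l2 dotZl dotZr mulrA -expr2 sqrtrM ?sqr_ge0 // sqrtr_sqr. Qed.
Lemma l2N v : l2 (- v) = l2 v.
Proof. by rewrite -scaleN1r l2Z normrN normr1 mul1r. Qed.
Lemma l2B u v : l2 (u - v) = l2 (v - u).
Proof. by rewrite -l2N opprB. Qed.

Lemma CS_sq u v : dot u v ^+ 2 <= dot u u * dot v v.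
Proof.
have [v0|vn0] := eqVneq (dot v v) 0.
  by rewrite (dot_eq0 v0) dot0r expr0n /= dot0r mulr0.
have vp : 0 < dot v v by rewrite lt_def vn0 dot_ge0.
have := dot_ge0 (u - (dot u v / dot v v) *: v).
rewrite !dotBl !dotBr !dotZl !dotZr (dotC v u) => h.
rewrite -subr_ge0.
have -> : dot u u * dot v v - dot u v ^+ 2 =
  dot v v * (dot u u - dot u v / dot v v * dot u v -
   (dot u v / dot v v * dot u v - dot u v / dot v v * (dot u v / dot v v * dot v v))).
  by field; rewrite vn0.
by rewrite mulr_ge0 // ltW.
Qed.

Lemma CS u v : `|dot u v| <= l2 u * l2 v.
Proof.
rewrite -sqrtrM ?dot_ge0 // -(sqrtr_sqr (dot u v)).
by rewrite ler_sqrt ?mulr_ge0 ?dot_ge0 // CS_sq.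
Qed.
Lemma CS' u v : dot u v <= l2 u * l2 v.
Proof. exact: le_trans (ler_norm _) (CS u v). Qed.

Lemma l2D u v : l2 (u + v) <= l2 u + l2 v.
Proof.
rewrite -(ler_pXn2r (_ : (0 < 2)%N)) ?nnegrE ?addr_ge0 ?l2_ge0 //.
rewrite l2_sq sqrrD !l2_sq dotDl !dotDr (dotC v u).
have := CS' u v; set a := dot u v; set b := l2 u * l2 v; rewrite -/b.
by move=> h; rewrite mulr2n; lra.
Qed.
End Dot.

Section Der.
Context {R : realType} {d : nat}.
Local Notation vec := 'cV[R]_d.
Implicit Types u v w x : vec.

Lemma vec_decomp v : v = \sum_j v j 0 *: ev j.
Proof.
apply/matrixP => i k; rewrite (ord1 k) summxE (bigD1 i) //= big1 => [|j ji].
  by rewrite !mxE !eqxx mulr1 addr0.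
by rewrite !mxE eq_sym (negbTE ji) mulr0.
Qed.

Lemma D_lin (W : normedModType R) (f : vec -> W) x v :
  differentiable f x -> 'D_v f x = \sum_j v j 0 *: 'D_(ev j) f x.
Proof.
move=> df; rewrite deriveE // {1}(vec_decomp v) linear_sum.
by apply: eq_bigr => j _; rewrite linearZ /= deriveE.
Qed.

Lemma D_grad (f : vec -> R) x v :
  differentiable f x -> 'D_v f x = dot (grad f x) v.
Proof.
move=> df; rewrite D_lin // /dot; apply: eq_bigr => j _.
by rewrite mxE mulrC.
Qed.

Lemma D_jac (G : vec -> vec) x v :
  differentiable G x -> 'D_v G x = jac G x *m v.
Proof.
move=> dG; rewrite D_lin //; apply/matrixP => i k.
rewrite summxE !mxE (ord1 k); apply: eq_bigr => j _.
by rewrite !mxE mulrC.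
Qed.

Lemma line_eq (W : normedModType R) (f : vec -> W) x v t :
  (fun h : R => h^-1 *: (((fun s : R => f (x + s *: v)) \o shift t) (h *: 1) - f (x + t *: v)))
  = (fun h : R => h^-1 *: ((f \o shift (x + t *: v)) (h *: v) - f (x + t *: v))).
Proof.
apply/funext => h /=; congr (_ *: (f _ - _)).
by rewrite /shift /= [h *: 1]mulr1 scalerDl addrCA addrA.
Qed.

Lemma line_derivable (W : normedModType R) (f : vec -> W) x v t :
  derivable f (x + t *: v) v -> derivable (fun s : R => f (x + s *: v)) t 1.
Proof. by rewrite /derivable line_eq. Qed.

Lemma line_derive (W : normedModType R) (f : vec -> W) x v t :
  'D_1 (fun s : R => f (x + s *: v)) t = 'D_v f (x + t *: v).
Proof. by rewrite /derive line_eq. Qed.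

Lemma line_is_derive (W : normedModType R) (f : vec -> W) x v t :
  differentiable f (x + t *: v) ->
  is_derive t 1 (fun s : R => f (x + s *: v)) ('D_v f (x + t *: v)).
Proof.
move=> df; split; first by apply: line_derivable; exact: diff_derivable.
exact: line_derive.
Qed.

Lemma line_is_derive_grad (f : vec -> R) x v t :
  differentiable f (x + t *: v) ->
  is_derive t 1 (fun s : R => f (x + s *: v)) (dot (grad f (x + t *: v)) v).
Proof. by move=> df; rewrite -D_grad //; exact: line_is_derive. Qed.

Lemma line_is_derive_dot (G : vec -> vec) x v w t :
  differentiable G (x + t *: v) ->
  is_derive t 1 (fun s : R => dot (G (x + s *: v)) w)
     (dot (jac G (x + t *: v) *m v) w).
Proof.
move=> dG.
have hG := line_is_derive dG.
have dM : derivable (fun s : R => G (x + s *: v)) t 1 by case: hG.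
have ent k : is_derive t 1 (fun s : R => G (x + s *: v) k 0)
     (('D_v G (x + t *: v)) k 0).
  split; first by move/derivable_mxP: dM; apply.
  by rewrite -line_derive (derive_mx dM) mxE.
have -> : (fun s : R => dot (G (x + s *: v)) w) =
          \sum_(k < d) (fun s : R => G (x + s *: v) k 0 * w k 0).
  by rewrite fct_sumE.
rewrite -D_jac // /dot.
apply: is_derive_sum => k.
have -> : (fun s : R => G (x + s *: v) k 0 * w k 0) =
   w k 0 \*: (fun s : R => G (x + s *: v) k 0).
  by apply/funext => s /=; rewrite mulrC.
by rewrite mulrC; apply: is_deriveZ.
Qed.
End Der.

Section OneD.
Context {R : realType}.

Lemma is_derive_cont (f : R -> R) (df t : R) : is_derive t 1 f df -> {for t, continuous f}.
Proof.
by case=> h _; apply: differentiable_continuous; apply/derivable1_diffP.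
Qed.

Lemma mvt_ab (f df : R -> R) (a b : R) : a < b -> (forall t : R, is_derive t 1 f (df t)) ->
  exists c, a < c < b /\ f b - f a = df c * (b - a).
Proof.
move=> ab H.
have cf : {within `[a, b], continuous f}.
  apply: continuous_subspaceT => x; exact: is_derive_cont (H x).
have [c cab E] := MVT ab (fun x _ => H x) cf.
by exists c; split => //; move: cab; rewrite in_itv.
Qed.

Lemma is_derive_quad (f : R -> R) (df c k t : R) : is_derive t 1 f df ->
  is_derive t 1 (fun s => f s - s * c - k * (s * s)) (df - c - k * (2 * t)).
Proof.
move=> hf.
have h1 : is_derive t 1 (fun s : R => s * c) c.
  have -> : (fun s : R => s * c) = c \*: id by apply/funext => s /=; rewrite mulrC.
  have h := is_deriveZ c (is_derive_id t (1:R)).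
  by rewrite [c *: (1:R)]mulr1 in h.
have h2 : is_derive t 1 (fun s : R => k * (s * s)) (k * (2 * t)).
  have -> : (fun s : R => k * (s * s)) = k \*: (id * id) by apply/funext => s.
  have h := is_deriveZ k (is_deriveM (is_derive_id t (1:R)) (is_derive_id t (1:R))).
  rewrite /= ![t *: (1:R)]mulr1 in h.
  by have -> : k * (2 * t) = k *: (t + t) by rewrite [_ *: _]/GRing.scale /=; ring.
have -> : (fun s => f s - s * c - k * (s * s)) = (f - (fun s : R => s * c)) - (fun s : R => k * (s * s)).
  by apply/funext.
apply: is_deriveB; exact: is_deriveB.
Qed.

Lemma taylor1 (f df : R -> R) (K : R) :
  (forall t : R, is_derive t 1 f (df t)) ->
  (forall t, 0 <= t <= 1 -> `|df t - df 0| <= K * t) ->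
  `|f 1 - f 0 - df 0| <= K / 2.
Proof.
move=> hd hK.
have [c [/andP[c0 c1] E]] := mvt_ab (f := fun s => f s - s * df 0 - (K/2) * (s * s))
   (df := fun t => df t - df 0 - (K/2) * (2 * t)) ltr01
   (fun t => is_derive_quad (df 0) (K/2) (hd t)).
have [c' [/andP[c0' c1'] E']] := mvt_ab (f := fun s => f s - s * df 0 - (- (K/2)) * (s * s))
   (df := fun t => df t - df 0 - (- (K/2)) * (2 * t)) ltr01
   (fun t => is_derive_quad (df 0) (- (K/2)) (hd t)).
have := hK c; rewrite (ltW c0) (ltW c1) => /(_ isT); rewrite ler_norml => /andP[l1 l2].
have := hK c'; rewrite (ltW c0') (ltW c1') => /(_ isT); rewrite ler_norml => /andP[l1' l2'].
have e1 : f 1 - f 0 - df 0 + K / 2 = df c' - df 0 + K * c'.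
  have -> : f 1 - f 0 - df 0 + K/2 = f 1 - 1 * df 0 - - (K / 2) * (1 * 1) - (f 0 - 0 * df 0 - - (K / 2) * (0 * 0)) by field.
  by rewrite E'; field.
have e2 : f 1 - f 0 - df 0 - K / 2 = df c - df 0 - K * c.
  have -> : f 1 - f 0 - df 0 - K/2 = f 1 - 1 * df 0 - (K / 2) * (1 * 1) - (f 0 - 0 * df 0 - (K / 2) * (0 * 0)) by field.
  by rewrite E; field.
rewrite ler_norml; apply/andP; split; lra.
Qed.
End OneD.

Section Lim.
Context {R : realType} {d : nat}.
Local Notation vec := 'cV[R]_d.

Lemma D_ge (f : vec -> R) x w c : derivable f x w ->
  (forall t : R, 0 < t -> t <= 1 -> c <= (f (x + t *: w) - f x) / t) ->
  c <= 'D_w f x.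
Proof.
move=> df H.
set q := (fun h : R => h^-1 *: ((f \o shift x) (h *: w) - f x)).
have hq : q @ 0^' --> 'D_w f x by exact: df.
have hr : q @ 0^'+ --> 'D_w f x.
  apply: cvg_trans hq.
  have sub : (fun u : R => 0 < u) `<=` (fun y : R => y != 0) by move=> y /= y0; rewrite gt_eqF.
  apply: cvg_app; exact: (@within_subset R _ _ (nbhs (0:R)) _ sub).
apply: (cvgr_to_ge hr).
near=> t.
have t0 : 0 < t by near: t; exact: nbhs_right_gt.
have t1 : t <= 1 by near: t; exact: nbhs_right_le ltr01.
rewrite /q /= /shift [_ *: _]mulrC [_ + x]addrC; exact: H.
Unshelve. all: by end_near.
Qed.
End Lim.

Section Op.
Context {R : realType} {d : nat}.
Local Notation vec := 'cV[R]_d.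
Implicit Types u v w x y : vec.

Definition rowv (A : 'M[R]_d) i : vec := \col_j A i j.

Lemma mx_bound (A : 'M[R]_d) v :
  l2 (A *m v) <= Num.sqrt (\sum_i dot (rowv A i) (rowv A i)) * l2 v.
Proof.
rewrite /l2 -sqrtrM; last by apply: sumr_ge0 => i _; exact: dot_ge0.
rewrite ler_sqrt; last by apply: mulr_ge0; [apply: sumr_ge0 => i _; exact: dot_ge0|exact: dot_ge0].
rewrite /dot mulr_suml; apply: ler_sum => i _.
have -> : (A *m v) i 0 = dot (rowv A i) v.
  by rewrite !mxE; apply: eq_bigr => j _; rewrite !mxE.
by rewrite -expr2 CS_sq.
Qed.

Lemma opnorm_bound (A : 'M[R]_d) v : l2 (A *m v) <= opnorm A * l2 v.
Proof.
have [->|vn0] := eqVneq v 0; first by rewrite mulmx0 l2_0 mulr0.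
have vp := l2_gt0 vn0.
rewrite -ler_pdivrMr //.
apply: sup_upper_bound; last by exists v.
split; first by exists (l2 (A *m v) / l2 v); exists v.
exists (Num.sqrt (\sum_i dot (rowv A i) (rowv A i))) => r [u [un0 ->]].
by rewrite ler_pdivrMr ?l2_gt0 // mx_bound.
Qed.

Lemma ev_neq0 (j : 'I_d) : ev j != 0 :> vec.
Proof. apply/negP => /eqP /matrixP /(_ j 0); rewrite /ev !mxE !eqxx /= => /eqP; by rewrite oner_eq0. Qed.

Lemma opnorm_ge0 (A : 'M[R]_d) : (0 < d)%N -> 0 <= opnorm A.
Proof.
move=> d0; pose j : 'I_d := Ordinal d0.
have en0 : ev j != 0 :> vec by exact: ev_neq0.
apply: le_trans (_ : l2 (A *m ev j) / l2 (ev j) <= _).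
  by rewrite divr_ge0 // l2_ge0.
apply: sup_upper_bound; last by exists (ev j).
split; first by exists (l2 (A *m ev j) / l2 (ev j)); exists (ev j).
exists (Num.sqrt (\sum_i dot (rowv A i) (rowv A i))) => r [u [un0 ->]].
by rewrite ler_pdivrMr ?l2_gt0 // mx_bound.
Qed.


Lemma LipM_bound (H : vec -> 'M[R]_d) (C : R) : (LipM H <= C%:E)%E ->
  forall x y v, l2 ((H x - H y) *m v) <= C * l2 (x - y) * l2 v.
Proof.
move=> hC x y v.
have [->|xy] := eqVneq x y; first by rewrite !subrr mul0mx l2_0 mulr0 mul0r.
have xyp : 0 < l2 (x - y) by rewrite l2_gt0 // subr_eq0.
apply: le_trans (opnorm_bound _ _) _; rewrite ler_wpM2r ?l2_ge0 //.
rewrite -ler_pdivrMr //.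
have : ((opnorm (H x - H y) / l2 (x - y))%:E <= LipM H)%E.
  by apply: ereal_sup_ubound; exists x, y.
by move=> /le_trans /(_ hC); rewrite lee_fin.
Qed.

Lemma LipV_bound (G : vec -> vec) (C : R) : (LipV G <= C%:E)%E ->
  forall x y, l2 (G x - G y) <= C * l2 (x - y).
Proof.
move=> hC x y.
have [->|xy] := eqVneq x y; first by rewrite !subrr l2_0 mulr0.
have xyp : 0 < l2 (x - y) by rewrite l2_gt0 // subr_eq0.
rewrite -ler_pdivrMr //.
have : ((l2 (G x - G y) / l2 (x - y))%:E <= LipV G)%E.
  by apply: ereal_sup_ubound; exists x, y.
by move=> /le_trans /(_ hC); rewrite lee_fin.
Qed.

Lemma LipV_ge0 (G : vec -> vec) : (0 < d)%N -> (0 <= LipV G)%E.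
Proof.
move=> d0; pose j : 'I_d := Ordinal d0.
apply: le_trans (_ : ((l2 (G 0 - G (ev j)) / l2 (0 - ev j))%:E <= _)%E).
  by rewrite lee_fin divr_ge0 // l2_ge0.
apply: ereal_sup_ubound; exists 0, (ev j); split => //.
by rewrite eq_sym ev_neq0.
Qed.

Lemma LipM_ge0 (H : vec -> 'M[R]_d) : (0 < d)%N -> (0 <= LipM H)%E.
Proof.
move=> d0; pose j : 'I_d := Ordinal d0.
apply: le_trans (_ : ((opnorm (H 0 - H (ev j)) / l2 (0 - ev j))%:E <= _)%E).
  by rewrite lee_fin divr_ge0 // ?l2_ge0 // opnorm_ge0.
apply: ereal_sup_ubound; exists 0, (ev j); split => //.
by rewrite eq_sym ev_neq0.
Qed.
End Op.

Section Alg.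
Context {R : realType}.
Lemma small_le0 (a K : R) : (forall s, 0 < s -> s <= 1 -> a <= s * K) -> a <= 0.
Proof.
move=> H; rewrite leNgt; apply/negP => a0.
have K0 : a <= K by have := H 1 ltr01 (lexx _); rewrite mul1r.
have Kp : 0 < K by apply: lt_le_trans K0.
have s0 : 0 < a / (2 * K) by rewrite divr_gt0 // mulr_gt0.
have s1 : a / (2 * K) <= 1.
  by rewrite ler_pdivrMr ?mulr_gt0 // mul1r; lra.
have := H _ s0 s1.
have -> : a / (2 * K) * K = a / 2 by field; rewrite gt_eqF.
lra.
Qed.

Lemma small_abs0 (a K : R) : (forall s, 0 < s -> s <= 1 -> `|a| <= s * K) -> a = 0.
Proof.
move=> H; apply/eqP; rewrite -normr_le0; apply: (small_le0 (K := K)) => s s0 s1.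
exact: H.
Qed.

Lemma quad_pos (A B : R) : (forall t, 0 < t -> t <= 1 -> 0 <= t * A + t ^+ 2 * B) -> 0 <= A.
Proof.
move=> H; rewrite -oppr_le0; apply: (small_le0 (K := `|B|)) => s s0 s1.
have := H s s0 s1; rewrite expr2 -mulrA -mulrDr pmulr_rge0 // => h.
have h2 : s * B <= s * `|B| by apply: ler_wpM2l; [exact: ltW|exact: ler_norm].
apply: le_trans h2; rewrite lerNl; rewrite -subr_ge0 opprK; done.
Qed.
End Alg.


Section Alg2.
Context {R : realType} {d : nat}.
Local Notation vec := 'cV[R]_d.
Lemma est_alg (A B u v : vec) (HY HX : 'M[R]_d) (s c C : R) : 0 < c < s -> 0 <= C ->
 `|dot (A - B - HY *m (s *: v)) u| <= C / 2 * (l2 (s *: v) ^+ 2 * l2 u) ->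
 `|dot ((HY - HX) *m v) u| <= C * (c * l2 u) * l2 v * l2 u ->
 `|(dot A u - dot B u) * s - s ^+ 2 * dot (HX *m v) u| <=
    s ^+ 3 * (C / 2 * (l2 v ^+ 2 * l2 u) + C * (l2 u ^+ 2 * l2 v)).
Proof.
move=> /andP[c0 cs] C0 h1 h2.
have s0 : 0 < s by apply: lt_trans cs.
have e : (dot A u - dot B u) * s - s ^+ 2 * dot (HX *m v) u
    = s * dot (A - B - HY *m (s *: v)) u + s ^+ 2 * dot ((HY - HX) *m v) u.
  rewrite !dotBl mulmxBl dotBl -scalemxAr dotZl.
  by rewrite expr2; ring.
rewrite e; apply: le_trans (ler_normD _ _) _.
rewrite (normrM s) (normrM (s ^+ 2)) (ger0_norm (ltW s0)) (ger0_norm (exprn_ge0 2 (ltW s0))).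
rewrite l2Z (ger0_norm (ltW s0)) in h1.
have lu := l2_ge0 u; have lv := l2_ge0 v.
have h2' : C * (c * l2 u) * l2 v * l2 u <= s * (C * (l2 u ^+ 2 * l2 v)).
  have -> : C * (c * l2 u) * l2 v * l2 u = c * (C * (l2 u ^+ 2 * l2 v)) by rewrite expr2; ring.
  apply: ler_wpM2r; last exact: ltW.
  by apply: mulr_ge0 => //; apply: mulr_ge0 => //; exact: exprn_ge0.
have h1' := ler_wpM2l (ltW s0) h1.
have h2'' := ler_wpM2l (exprn_ge0 2 (ltW s0)) (le_trans h2 h2').
rewrite mulrDr; apply: lerD.
  by apply: le_trans h1' _; rewrite le_eqVlt; apply/orP; left; apply/eqP; rewrite !expr2 exprS expr2; ring.
by apply: le_trans h2'' _; rewrite le_eqVlt; apply/orP; left; apply/eqP; rewrite !expr2 exprS expr2; ring.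
Qed.

Lemma sym_alg (a b c e p q s K1 K2 : R) : 0 < s ->
  `|a - b - (c - e) - s ^+ 2 * p| <= s ^+ 3 * K1 ->
  `|a - c - (b - e) - s ^+ 2 * q| <= s ^+ 3 * K2 ->
  `|p - q| <= s * (K1 + K2).
Proof.
move=> s0 h1 h2.
have s2 : 0 < s ^+ 2 by rewrite exprn_gt0.
have e1 : s ^+ 2 * (p - q) = (a - c - (b - e) - s ^+ 2 * q) - (a - b - (c - e) - s ^+ 2 * p) by ring.
have h : `|s ^+ 2 * (p - q)| <= s ^+ 3 * K2 + s ^+ 3 * K1.
  by rewrite e1; apply: le_trans (ler_normB _ _) _; exact: lerD.
rewrite (normrM (s ^+ 2)) (ger0_norm (ltW s2)) in h.
rewrite -(ler_pM2l s2); apply: le_trans h _.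
by rewrite le_eqVlt; apply/orP; left; apply/eqP; rewrite exprS; ring.
Qed.
End Alg2.

Section Smooth.
Context {R : realType} {d : nat}.
Local Notation vec := 'cV[R]_d.
Implicit Types u v w x y : vec.

Lemma T0 (f : vec -> R) x v (K : R) : (forall y, differentiable f y) ->
  (forall t, 0 <= t <= 1 -> `|dot (grad f (x + t *: v) - grad f x) v| <= K * t) ->
  `|f (x + v) - f x - dot (grad f x) v| <= K / 2.
Proof.
move=> df hK.
have hK' : forall t, 0 <= t <= 1 ->
   `|dot (grad f (x + t *: v)) v - dot (grad f (x + 0 *: v)) v| <= K * t.
  by move=> t /hK; rewrite scale0r addr0 dotBl.
have := @taylor1 R (fun s => f (x + s *: v)) (fun s => dot (grad f (x + s *: v)) v) K
  (fun t => line_is_derive_grad (df _)) hK'.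
by rewrite /= scale1r scale0r addr0.
Qed.

Variables (L : vec -> R) (C3 : R).
Hypothesis dL : forall x, differentiable L x.
Hypothesis dG : forall x, differentiable (grad L) x.
Hypothesis C3ge0 : 0 <= C3.
Hypothesis hLip : forall x y v, l2 ((hess L x - hess L y) *m v) <= C3 * l2 (x - y) * l2 v.

Lemma T1 x v w :
  `|dot (grad L (x + v) - grad L x - hess L x *m v) w| <= C3 / 2 * (l2 v ^+ 2 * l2 w).
Proof.
suff hK : forall t, 0 <= t <= 1 ->
   `|dot (hess L (x + t *: v) *m v) w - dot (hess L (x + 0 *: v) *m v) w| <= C3 * (l2 v ^+ 2 * l2 w) * t.
  have := @taylor1 R (fun s => dot (grad L (x + s *: v)) w)
    (fun s => dot (hess L (x + s *: v) *m v) w) (C3 * (l2 v ^+ 2 * l2 w))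
    (fun t => line_is_derive_dot w (dG _)) hK.
  rewrite /= scale1r scale0r addr0 !dotBl => h.
  by apply: le_trans h _; rewrite le_eqVlt; apply/orP; left; apply/eqP; field.
move=> t /andP[t0 t1]; rewrite scale0r addr0 -dotBl -mulmxBl.
apply: le_trans (CS _ _) _.
apply: le_trans (ler_wpM2r (l2_ge0 _) (hLip _ _ _)) _.
rewrite addrC addKr l2Z ger0_norm //.
have -> : C3 * (t * l2 v) * l2 v * l2 w = C3 * (l2 v ^+ 2 * l2 w) * t by ring.
done.
Qed.

Lemma mvt_diff a b u (s : R) : 0 < s ->
  exists c, 0 < c < s /\
   (L (a + s *: u) - L (b + s *: u)) - (L a - L b) =
   (dot (grad L (a + c *: u)) u - dot (grad L (b + c *: u)) u) * s.
Proof.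
move=> s0.
have hd (t : R) : is_derive t 1 ((fun r : R => L (a + r *: u)) - (fun r : R => L (b + r *: u)))
   (dot (grad L (a + t *: u)) u - dot (grad L (b + t *: u)) u).
  by apply: is_deriveB; exact: line_is_derive_grad.
have [c [cs E]] := mvt_ab s0 hd.
exists c; split => //.
by rewrite subr0 in E; rewrite -E !fctE !scale0r !addr0.
Qed.

Lemma hess_sym x u v : dot (hess L x *m v) u = dot (hess L x *m u) v.
Proof.
apply/eqP; rewrite -subr_eq0; apply/eqP.
pose K := C3 / 2 * (l2 v ^+ 2 * l2 u) + C3 * (l2 u ^+ 2 * l2 v)
        + (C3 / 2 * (l2 u ^+ 2 * l2 v) + C3 * (l2 v ^+ 2 * l2 u)).
apply: (small_abs0 (K := K)) => s s0 s1.
have est (u' v' : vec) :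
   `|(L (x + s *: v' + s *: u') - L (x + s *: u')) - (L (x + s *: v') - L x)
      - s ^+ 2 * dot (hess L x *m v') u'| <=
     s ^+ 3 * (C3 / 2 * (l2 v' ^+ 2 * l2 u') + C3 * (l2 u' ^+ 2 * l2 v')).
  have [c [cs E]] := mvt_diff (x + s *: v') x u' s0.
  rewrite E.
  set y := x + c *: u'.
  have -> : x + s *: v' + c *: u' = y + s *: v' by rewrite /y addrAC.
  have h1 := T1 y (s *: v') u'.
  have h2 : `|dot ((hess L y - hess L x) *m v') u'| <= C3 * (c * l2 u') * l2 v' * l2 u'.
    apply: le_trans (CS _ _) _; apply: ler_wpM2r; first exact: l2_ge0.
    have -> : c * l2 u' = l2 (y - x).
      by rewrite /y addrAC subrr add0r l2Z ger0_norm // ltW //; case/andP: cs.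
    exact: hLip.
  move: h1 h2.
  move: (grad L (y + s *: v')) (grad L y) (hess L y) (hess L x) => A B HY HX h1 h2.
  exact: (est_alg cs C3ge0 h1 h2).
have h1 := est u v.
have h2 := est v u.
move: h1 h2.
have -> : x + s *: u + s *: v = x + s *: v + s *: u by rewrite addrAC.
move: (L (x + s *: v + s *: u)) (L (x + s *: u)) (L (x + s *: v)) (L x) => a b c e.
move: (dot (hess L x *m v) u) (dot (hess L x *m u) v) => p q h1 h2.
rewrite /K; exact: (sym_alg s0 h1 h2).
Qed.
End Smooth.

Section Opt.
Context {R : realType} {d : nat}.
Local Notation vec := 'cV[R]_d.
Implicit Types u v w x y : vec.

Lemma dir_ge (f : vec -> R) x w c : differentiable f x ->
  (forall t : R, 0 < t -> t <= 1 -> t * c <= f (x + t *: w) - f x) ->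
  c <= dot (grad f x) w.
Proof.
move=> df H; rewrite -D_grad //; apply: D_ge; first exact: diff_derivable.
by move=> t t0 t1; rewrite ler_pdivlMr // mulrC; exact: H.
Qed.

Lemma addKv x w : x + w - x = w.
Proof. by rewrite addrC addKr. Qed.

Lemma subdiff_grad (f : vec -> R) y u : (forall x, differentiable f x) ->
  subdiff f y u -> u = grad f y.
Proof.
move=> df hu.
have H : dot u (u - grad f y) <= dot (grad f y) (u - grad f y).
  apply: dir_ge => // t t0 t1.
  have := hu (y + t *: (u - grad f y)).
  by rewrite addKv dotZr -lerBrDl.
apply/eqP; rewrite -subr_eq0; apply/eqP; apply: dot_eq0.
apply/eqP; rewrite eq_le dot_ge0 andbT.
by rewrite dotBl subr_le0.
Qed.

Lemma convex_sub (f : vec -> R) : (forall x, subdiff f x !=set0) ->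
  forall h y (t : R), 0 <= t -> t <= 1 -> f (h + t *: (y - h)) <= (1 - t) * f h + t * f y.
Proof.
move=> hs h y t t0 t1.
set z := h + t *: (y - h).
have [u hu] := hs z.
have e1 := hu h; have e2 := hu y.
move: e1 e2.
have -> : h - z = - t *: (y - h) by rewrite /z opprD addrA subrr add0r scaleNr.
have -> : y - z = (1 - t) *: (y - h) by rewrite /z scalerBl scale1r opprD addrA.
rewrite !dotZr.
move: (f z) (f h) (f y) (dot u (y - h)) => a b c e h1 h2.
have t1' : 0 <= 1 - t by rewrite subr_ge0.
have := ler_wpM2l t1' h1; have := ler_wpM2l t0 h2.
move=> k1 k2.
have : (1 - t) * (a + - t * e) + t * (a + (1 - t) * e) = a by ring.
lra.
Qed.

Lemma subgrad_of_min (F l : vec -> R) (k : R) h : 0 < k ->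
  (forall x, subdiff F x !=set0) -> differentiable l h ->
  (forall y, F h + k * l h <= F y + k * l y) ->
  subdiff F h (- k *: grad l h).
Proof.
move=> k0 hs dl hmin y.
rewrite dotZl.
have H : (F h - F y) / k <= dot (grad l h) (y - h).
  apply: dir_ge => // t t0 t1.
  have c1 := convex_sub hs h y (ltW t0) t1.
  have c2 := hmin (h + t *: (y - h)).
  rewrite mulrA ler_pdivrMr //.
  move: c1 c2; move: (F (h + t *: (y - h))) (l (h + t *: (y - h))) => a b.
  move: (F h) (F y) (l h) => p q r c1 c2.
  have e : (b - r) * k = (k * b + a) - (k * r + a) by ring.
  have e2 : (1 - t) * p + t * q = p - t * (p - q) by ring.
  rewrite e; lra.
move: H; rewrite ler_pdivrMr // => H.
have : F h - F y <= dot (grad l h) (y - h) * k by [].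
move: (F h) (F y) (dot (grad l h) (y - h)) => a b c.
move=> H'; rewrite mulNr.
have : c * k = k * c by rewrite mulrC.
lra.
Qed.

Lemma opt_conv (L pi : vec -> R) (lam : R) m : 0 <= lam -> convex_fun pi ->
  differentiable L m -> (forall y, L m + lam * pi m <= L y + lam * pi y) ->
  forall y, 0 <= dot (grad L m) (y - m) + lam * (pi y - pi m).
Proof.
move=> l0 cpi dL hmin y.
rewrite -lerBlDr sub0r.
apply: dir_ge => // t t0 t1.
have c1 := cpi y m t (ltW t0) t1.
have -> : m + t *: (y - m) = t *: y + (1 - t) *: m.
  by rewrite scalerBr scalerBl scale1r addrCA addrC.
have c2 := hmin (t *: y + (1 - t) *: m).
move: c1 c2; move: (pi (t *: y + (1 - t) *: m)) (L (t *: y + (1 - t) *: m)) => a b.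
move: (pi y) (pi m) (L m) => p q r c1 c2.
have : lam * a <= lam * (t * p + (1 - t) * q) by apply: ler_wpM2l.
move=> c3.
have e : t * - (lam * (p - q)) = lam * q - lam * (t * p + (1 - t) * q) by ring.
lra.
Qed.

Lemma quad_exp (a w : vec) (H : 'M[R]_d) (t : R) :
  dot (a - t *: w) (H *m (a - t *: w)) =
  dot a (H *m a) - t * dot a (H *m w) - t * dot w (H *m a) + t ^+ 2 * dot w (H *m w).
Proof.
rewrite mulmxBr !dotBl !dotBr -!scalemxAr !dotZl !dotZr.
move: (dot a (H *m a)) (dot a (H *m w)) (dot w (H *m a)) (dot w (H *m w)) => q1 q2 q3 q4.
by rewrite expr2; ring.
Qed.

Lemma opt_prox (H : 'M[R]_d) (G bh : vec) (pi : vec -> R) (lam : R) p :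
  0 <= lam -> convex_fun pi ->
  (forall b, 2^-1 * dot (bh - p) (H *m (bh - p)) + dot p G + lam * pi p <=
             2^-1 * dot (bh - b) (H *m (bh - b)) + dot b G + lam * pi b) ->
  forall y, 0 <= 2^-1 * (dot (p - bh) (H *m (y - p)) + dot (y - p) (H *m (p - bh)))
                 + dot (y - p) G + lam * (pi y - pi p).
Proof.
move=> l0 cpi hmin y.
apply: (quad_pos (B := 2^-1 * dot (y - p) (H *m (y - p)))) => t t0 t1.
have c1 := cpi y p t (ltW t0) t1.
have e0 : p + t *: (y - p) = t *: y + (1 - t) *: p.
  by rewrite scalerBr scalerBl scale1r addrCA addrC.
have c2 := hmin (p + t *: (y - p)).
have e1 : bh - (p + t *: (y - p)) = (bh - p) - t *: (y - p) by rewrite opprD addrA.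
rewrite e1 quad_exp (dotDl p (t *: (y - p)) G) (dotZl t (y - p) G) e0 in c2.
have c3 : lam * pi (t *: y + (1 - t) *: p) <= lam * (t * pi y + (1 - t) * pi p).
  by apply: ler_wpM2l.
move: c2 c3.
have ep : dot (p - bh) (H *m (y - p)) = - dot (bh - p) (H *m (y - p)).
  by rewrite -dotNl opprB.
have eq : dot (y - p) (H *m (p - bh)) = - dot (y - p) (H *m (bh - p)).
  by rewrite -dotNr -mulmxN opprB.
rewrite ep eq.
move: (pi (t *: y + (1 - t) *: p)) (pi y) (pi p) => a b c.
move: (dot (bh - p) (H *m (bh - p))) (dot (bh - p) (H *m (y - p))) (dot (y - p) (H *m (bh - p)))
      (dot (y - p) (H *m (y - p))) (dot p G) (dot (y - p) G) => q1 q2 q3 q4 q5 q6 c2 c3.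
have e : t * (2^-1 * (- q2 + - q3) + q6 + lam * (b - c)) + t ^+ 2 * (2^-1 * q4) =
  (2^-1 * (q1 - t * q2 - t * q3 + t ^+ 2 * q4) + (q5 + t * q6) + lam * (t * b + (1 - t) * c))
  - (2^-1 * q1 + q5 + lam * c) by rewrite expr2; ring.
rewrite e; lra.
Qed.
End Opt.

Section Core.
Context {R : realType} {d : nat}.
Local Notation vec := 'cV[R]_d.
Implicit Types u v w x y : vec.

Lemma grad_in_subdiff (L : vec -> R) (nu : R -> R) :
  (forall x, differentiable L x) -> grad_growth nu L -> forall y, subdiff L y (grad L y).
Proof.
move=> dL [hs _] y; have [u hu] := hs y.
by rewrite -(subdiff_grad dL hu).
Qed.

Lemma core_A (L l pi : vec -> R) (k cm lam : R) h m :
  0 < k -> 0 < cm -> differentiable l h ->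
  grad_growth (fun r => cm * r ^+ 2) (fun b => L b + lam * pi b) ->
  (forall y, (L h + lam * pi h) + k * l h <= (L y + lam * pi y) + k * l y) ->
  (forall y, L m + lam * pi m <= L y + lam * pi y) ->
  cm * l2 (m - h) <= k * l2 (grad l h).
Proof.
move=> k0 cm0 dl [hs hg] hmh hmm.
have su := subgrad_of_min (F := fun b => L b + lam * pi b) k0 hs dl hmh.
have s0 : subdiff (fun b => L b + lam * pi b) m 0.
  by move=> y /=; rewrite dot0l addr0; exact: hmm.
have := hg m h _ _ su s0.
rewrite subr0 dotZr => H.
have c := CS (h - m) (grad l h).
rewrite (l2B h m) in c.
have a0 := l2_ge0 (m - h).
have g0 := l2_ge0 (grad l h).
move: H c; move: (dot (h - m) (grad l h)) (l2 (m - h)) (l2 (grad l h)) a0 g0 => e a g a0 g0 H c.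
have H2 : cm * a ^+ 2 <= k * g * a.
  apply: le_trans H _.
  have : - e <= a * g by apply: le_trans c; rewrite -normrN ler_norm.
  move=> c'; rewrite mulNr -mulrN mulrC -mulrA [g * a]mulrC.
  by rewrite [- e * k]mulrC; apply: ler_wpM2l => //; exact: ltW.
have [->|ap] := eqVneq a 0.
  by rewrite mulr0 mulr_ge0 // ltW.
have ap' : 0 < a by rewrite lt_def ap a0.
by rewrite -(ler_pM2r ap') -mulrA -expr2.
Qed.

Lemma core_B (L pi : vec -> R) (cm C3 lam : R) h m p :
  0 < cm -> 0 <= C3 -> 0 <= lam -> convex_fun pi ->
  (forall x, differentiable L x) -> (forall x, differentiable (grad L) x) ->
  (forall x y v, l2 ((hess L x - hess L y) *m v) <= C3 * l2 (x - y) * l2 v) ->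
  grad_growth (fun r => cm * r ^+ 2) L ->
  (forall y, L m + lam * pi m <= L y + lam * pi y) ->
  (forall b, 2^-1 * dot (h - p) (hess L h *m (h - p)) + dot p (grad L h) + lam * pi p <=
             2^-1 * dot (h - b) (hess L h *m (h - b)) + dot b (grad L h) + lam * pi b) ->
  2 * cm * l2 (p - m) <= C3 * l2 (m - h) ^+ 2.
Proof.
move=> cm0 C0 l0 cpi dL dG hLip g0 hmm hmp.
set H := hess L h.
have qf v : cm * l2 v ^+ 2 <= dot (H *m v) v.
  rewrite -subr_le0; apply: (small_le0 (K := C3 / 2 * (l2 v ^+ 2 * l2 v))) => t t0 t1.
  have gs := grad_in_subdiff dL g0.
  have := g0.2 h (h + t *: v) _ _ (gs _) (gs _).
  have -> : h - (h + t *: v) = - (t *: v) by rewrite opprD addrA subrr add0r.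
  rewrite l2N l2Z (ger0_norm (ltW t0)) addKv dotZl dotC => Hg.
  have T := T1 dG hLip h (t *: v) v.
  rewrite l2Z (ger0_norm (ltW t0)) -scalemxAr in T.
  rewrite (dotBl (grad L (h + t *: v) - grad L h)) (dotZl t (H *m v) v) in T.
  move: Hg T; move: (dot (grad L (h + t *: v) - grad L h) v) (dot (H *m v) v) (l2 v) => q r lv Hg T.
  have T' : q - t * r <= C3 / 2 * ((t * lv) ^+ 2 * lv) by apply: le_trans (ler_norm _) T.
  have t2 : 0 < t ^+ 2 by rewrite exprn_gt0.
  rewrite -(ler_pM2l t2).
  have e1 : t ^+ 2 * (cm * lv ^+ 2 - r) = cm * (t * lv) ^+ 2 - t * (t * r) by rewrite !expr2; ring.
  have e2 : t ^+ 2 * (t * (C3 / 2 * (lv ^+ 2 * lv))) = t * (C3 / 2 * ((t * lv) ^+ 2 * lv)) by rewrite !expr2; ring.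
  rewrite e1 e2.
  have := ler_wpM2l (ltW t0) T'.
  rewrite mulrBr => T''.
  lra.
have sym u v : dot (H *m v) u = dot (H *m u) v by exact: (hess_sym dL dG C0 hLip).
have o1 := opt_prox l0 cpi hmp m.
have o2 := opt_conv l0 cpi (dL m) hmm p.
have T := T1 dG hLip h (m - h) (m - p).
have em : h + (m - h) = m by rewrite addrC subrK.
rewrite em -/H in T; rewrite -/H in o1.
have q := qf (m - p).
have e1 : dot (p - h) (H *m (m - p)) = dot (m - p) (H *m (m - h)) - dot (H *m (m - p)) (m - p).
  rewrite dotC sym dotC.
  have -> : p - h = (m - h) - (m - p) by rewrite opprB [RHS]addrC addrA subrK.
  by rewrite mulmxBr (dotBr (H *m (m - h))) (dotC (m - p) (H *m (m - p))).
have e2 : dot (m - p) (H *m (p - h)) = dot (m - p) (H *m (m - h)) - dot (H *m (m - p)) (m - p).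
  by rewrite -e1 dotC sym dotC.
have e3 : dot (grad L m - grad L h - H *m (m - h)) (m - p) =
   dot (grad L m) (m - p) - dot (m - p) (grad L h) - dot (m - p) (H *m (m - h)).
  by rewrite (dotBl (grad L m - grad L h)) (dotBl (grad L m)) (dotC (grad L h)) (dotC (H *m (m - h))).
have e4 : dot (grad L m) (p - m) = - dot (grad L m) (m - p) by rewrite -dotNr opprB.
rewrite e1 e2 in o1; rewrite e4 in o2; rewrite e3 in T.
have dge := l2_ge0 (m - p); have age := l2_ge0 (m - h).
rewrite (l2B p m).
move: o1 o2 T q dge age.
move: (dot (grad L m) (m - p)) (dot (m - p) (grad L h)) (dot (m - p) (H *m (m - h)))
  (dot (H *m (m - p)) (m - p)) (pi m) (pi p) (l2 (m - p)) (l2 (m - h)) => A B Cq Dq pm pp dl al.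
move=> o1 o2 T q dge age.
have T' : - (A - B - Cq) <= C3 / 2 * (al ^+ 2 * dl) by apply: le_trans T; rewrite -normrN ler_norm.
have key : cm * dl ^+ 2 <= C3 / 2 * (al ^+ 2 * dl).
  have : 2^-1 * (Cq - Dq + (Cq - Dq)) = Cq - Dq by field.
  move=> e; rewrite e in o1.
  lra.
have [->|dn] := eqVneq dl 0.
  by rewrite mulr0 mulr_ge0 // exprn_ge0.
have dp : 0 < dl by rewrite lt_def dn dge.
rewrite -(ler_pM2r dp).
have -> : 2 * cm * dl * dl = 2 * (cm * dl ^+ 2) by rewrite expr2; ring.
have -> : C3 * al ^+ 2 * dl = 2 * (C3 / 2 * (al ^+ 2 * dl)) by field.
by rewrite ler_pM2l.
Qed.
End Core.

Section Sm.
Context {R : realType} {d : nat}.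
Local Notation vec := 'cV[R]_d.
Implicit Types u v w x y : vec.

Lemma fine_ge (x : R) (B : \bar R) : (x%:E <= B)%E -> (B < +oo)%E -> x <= fine B.
Proof. by case: B => [r| |] //=; rewrite lee_fin. Qed.

Lemma core_C (l : vec -> R) (Lp : R) h m p : (forall x, differentiable l x) -> 0 <= Lp ->
  (forall x y, l2 (grad l x - grad l y) <= Lp * l2 (x - y)) ->
  `|l p - l m| <= l2 (grad l h) * l2 (p - m) + Lp * l2 (m - h) * l2 (p - m)
                  + Lp * l2 (p - m) ^+ 2 / 2.
Proof.
move=> dl L0 hL.
have hK : forall t, 0 <= t <= 1 ->
   `|dot (grad l (m + t *: (p - m)) - grad l m) (p - m)| <= Lp * l2 (p - m) ^+ 2 * t.
  move=> t /andP[t0 t1].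
  apply: le_trans (CS _ _) _.
  apply: le_trans (ler_wpM2r (l2_ge0 _) (hL _ _)) _.
  rewrite addrC addKr l2Z ger0_norm //.
  by rewrite le_eqVlt; apply/orP; left; apply/eqP; rewrite expr2; ring.
have h0 := T0 dl hK.
have ep : m + (p - m) = p by rewrite addrC subrK.
rewrite ep in h0.
have h1 : `|dot (grad l m) (p - m)| <= l2 (grad l h) * l2 (p - m) + Lp * l2 (m - h) * l2 (p - m).
  have -> : grad l m = grad l h + (grad l m - grad l h) by rewrite addrC subrK.
  rewrite dotDl; apply: le_trans (ler_normD _ _) _; apply: lerD; first exact: CS.
  apply: le_trans (CS _ _) _; apply: ler_wpM2r; first exact: l2_ge0.
  exact: hL.
have -> : l p - l m = (l p - l m - dot (grad l m) (p - m)) + dot (grad l m) (p - m).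
  by rewrite subrK.
apply: le_trans (ler_normD _ _) _.
rewrite [X in _ <= X]addrC; apply: lerD => //.
Qed.

Lemma sum_smooth (n : nat) (fs : 'I_n -> vec -> R) (c : 'I_n -> R) :
  (forall j x, differentiable (fs j) x) -> (forall j x, differentiable (grad (fs j)) x) ->
  (forall x, differentiable (fun b => \sum_j c j * fs j b) x) /\
  (forall x, differentiable (grad (fun b => \sum_j c j * fs j b)) x).
Proof.
move=> df dg.
have eF : (fun b => \sum_j c j * fs j b) = \sum_j (c j *: fs j).
  by rewrite fct_sumE.
have eG : grad (fun b => \sum_j c j * fs j b) = \sum_j (c j *: grad (fs j)).
  rewrite fct_sumE eF; apply/funext => x; apply/matrixP => k k'.
  rewrite (ord1 k') /grad !mxE summxE derive_sum; last first.
    by move=> j; apply: diff_derivable; apply: differentiableZ.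
  apply: eq_bigr => j _.
  rewrite !mxE.
  have -> : (c j *: fs j) = c j \*: fs j by [].
  by rewrite deriveZ //; apply: diff_derivable.
split => x.
  by rewrite eF; apply: differentiable_sum => j; apply: differentiableZ.
by rewrite eG; apply: differentiable_sum => j; apply: differentiableZ.
Qed.
End Sm.

Lemma arith {R : realType} (k cm C3 Lp g a dl X : R) : 0 < k -> 0 < cm -> 0 <= C3 -> 0 <= Lp ->
  0 <= g -> 0 <= a -> 0 <= dl -> cm * a <= k * g -> 2 * cm * dl <= C3 * a ^+ 2 ->
  X <= g * dl + Lp * a * dl + Lp * dl ^+ 2 / 2 ->
  X <= C3 * k ^+ 2 * g ^+ 3 / (2 * cm ^+ 3) + C3 * Lp * k ^+ 3 * g ^+ 3 / (2 * cm ^+ 4)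
       + C3 ^+ 2 * Lp * k ^+ 4 * g ^+ 4 / (8 * cm ^+ 6).
Proof.
move=> k0 cm0 C0 L0 g0 a0 d0 hA hB hX.
set A := k * g / cm.
set D := C3 * A ^+ 2 / (2 * cm).
have aA : a <= A by rewrite /A ler_pdivlMr // mulrC.
have A0 : 0 <= A by rewrite /A; apply: divr_ge0; [apply: mulr_ge0 => //; exact: ltW|exact: ltW].
have dD : dl <= D.
  rewrite /D ler_pdivlMr ?mulr_gt0 //.
  apply: le_trans (_ : dl * (2 * cm) <= C3 * a ^+ 2) _.
    by apply: le_trans hB; rewrite le_eqVlt; apply/orP; left; apply/eqP; ring.
  apply: ler_wpM2l => //.
  by rewrite ler_pXn2r // nnegrE.
have D0 : 0 <= D by rewrite /D; apply: divr_ge0; [apply: mulr_ge0 => //; exact: exprn_ge0|apply: mulr_ge0 => //; exact: ltW].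
apply: le_trans hX _.
have e : C3 * k ^+ 2 * g ^+ 3 / (2 * cm ^+ 3) + C3 * Lp * k ^+ 3 * g ^+ 3 / (2 * cm ^+ 4)
       + C3 ^+ 2 * Lp * k ^+ 4 * g ^+ 4 / (8 * cm ^+ 6) = g * D + Lp * A * D + Lp * D ^+ 2 / 2.
  by rewrite /D /A; field; rewrite gt_eqF.
rewrite e; apply: lerD; first apply: lerD.
- by apply: ler_wpM2l.
- by apply: ler_pM => //; [apply: mulr_ge0|apply: ler_wpM2l].
- apply: ler_wpM2r => //; apply: ler_wpM2l => //.
  by rewrite ler_pXn2r // nnegrE.
Qed.

Section PerI.
Context {R : realType} {d : nat}.
Local Notation vec := 'cV[R]_d.

Lemma dim0_eq (d0 : d = 0%N) (u v : vec) : u = v.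
Proof. by apply/matrixP => a b; case: a => a ha; exfalso; rewrite d0 in ha. Qed.

Lemma l2_dim0 (d0 : d = 0%N) (v : vec) : l2 v = 0.
Proof. by rewrite (dim0_eq d0 v 0) l2_0. Qed.

Lemma fine_LipV_ge0 (G : vec -> vec) : 0 <= fine (LipV G).
Proof.
have [d0|dp] := posnP d; last exact/fine_ge0/LipV_ge0.
rewrite /LipV.
have -> : [set r | exists x y : vec, x != y /\ r = (l2 (G x - G y) / l2 (x - y))%:E] = set0.
  apply/seteqP; split => // r [x [y [xy _]]].
  by move/negP: xy; apply; apply/eqP; exact: dim0_eq.
by rewrite ereal_sup0.
Qed.

Lemma LipV_fin (G : vec -> vec) : (0 < d)%N -> (LipV G < +oo)%E ->
  (LipV G <= (fine (LipV G))%:E)%E.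
Proof.
move=> dp hf; rewrite fineK //.
by rewrite ge0_fin_numE // LipV_ge0.
Qed.
End PerI.

Lemma per_i {R : realType} {d n : nat} {Z : Type} (z : 'I_n -> Z)
  (ell : Z -> 'cV[R]_d -> R) (pi : 'cV[R]_d -> R) (lam cm C3 : R)
  (bh bm bp : 'cV[R]_d) (i : 'I_n) :
  (0 < n)%N -> 0 <= lam -> 0 < cm -> 0 <= C3 -> convex_fun pi ->
  (forall zz x, differentiable (ell zz) x) ->
  (forall zz x, differentiable (grad (ell zz)) x) ->
  is_argmin (mPn z ell pi lam) bh -> is_argmin (mPm z ell pi i lam) bm ->
  is_argmin (prox_obj z ell pi bh i lam) bp ->
  grad_growth (fun r => cm * r ^+ 2) (mPm z ell pi i lam) ->
  grad_growth (fun r => cm * r ^+ 2) (mPm z ell pi i 0) ->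
  (LipM (hess (lossPm z ell i)) <= C3%:E)%E ->
  (l2 (grad (ell (z i)) bh) != 0 -> (LipV (grad (ell (z i))) < +oo)%E) ->
  `|ell (z i) bp - ell (z i) bm| <=
   C3 * n%:R^-1 ^+ 2 * l2 (grad (ell (z i)) bh) ^+ 3 / (2 * cm ^+ 3)
   + C3 * fine (LipV (grad (ell (z i)))) * n%:R^-1 ^+ 3 * l2 (grad (ell (z i)) bh) ^+ 3 / (2 * cm ^+ 4)
   + C3 ^+ 2 * fine (LipV (grad (ell (z i)))) * n%:R^-1 ^+ 4 * l2 (grad (ell (z i)) bh) ^+ 4 / (8 * cm ^+ 6).
Proof.
move=> n0 l0 cm0 C0 cpi dell dgell hmh hmm hmp hgr hgr0 hLM hfin.
set k := n%:R^-1.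
have k0 : 0 < k by rewrite /k invr_gt0 ltr0n.
set L := lossPm z ell i; set l := ell (z i).
have eL : L = fun b => \sum_j (k * (j != i)%:R) * ell (z j) b.
  apply/funext => b; rewrite /L /lossPm big_mkcond /= mulr_sumr; apply: eq_bigr => j _.
  by case: (j != i); rewrite ?mulr1 ?mulr0 ?mul0r.
have [dL dG] : (forall x, differentiable L x) /\ (forall x, differentiable (grad L) x).
  by rewrite eL; apply: sum_smooth.
have hLip := LipM_bound hLM.
have e0 : mPm z ell pi i 0 = L by apply/funext => b; rewrite /mPm mul0r addr0.
rewrite e0 in hgr0.
have eP b : mPn z ell pi lam b = (L b + lam * pi b) + k * l b.
  rewrite /mPn /lossPn /L /lossPm (bigD1 i) //= mulrDr -/k -/l.
  move: (l b) (\sum_(j < n | j != i) ell (z j) b) (pi b) => a s c.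
  by ring.
have hmh' : forall y, (L bh + lam * pi bh) + k * l bh <= (L y + lam * pi y) + k * l y.
  by move=> y; rewrite -!eP; exact: hmh.
have hA := core_A k0 cm0 (dell _ bh) hgr hmh' hmm.
have hB := core_B cm0 C0 l0 cpi dL dG hLip hgr0 hmm hmp.
have Lp0 := fine_LipV_ge0 (grad l).
apply: (arith k0 cm0 C0 Lp0 (l2_ge0 _) (l2_ge0 (bm - bh)) (l2_ge0 (bp - bm)) hA hB).
have [g0|gn0] := eqVneq (l2 (grad l bh)) 0.
  have a0 : l2 (bm - bh) = 0.
    apply/eqP; rewrite eq_le l2_ge0 andbT.
    by rewrite -(ler_pM2l cm0) mulr0; move: hA; rewrite g0 mulr0.
  have d0 : l2 (bp - bm) = 0.
    apply/eqP; rewrite eq_le l2_ge0 andbT.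
    have c2 : 0 < 2 * cm by rewrite mulr_gt0.
    by rewrite -(ler_pM2l c2) mulr0; move: hB; rewrite a0 expr0n /= mulr0.
  have -> : bp = bm by apply/eqP; rewrite -subr_eq0; apply/eqP; exact: l2_eq0.
  rewrite subrr normr0 subrr l2_0 expr0n /= !mulr0 mul0r !addr0.
  done.
have dp : (0 < d)%N.
  rewrite lt0n; apply/eqP => d0; move/eqP: gn0; apply; exact: l2_dim0.
have hLV := LipV_bound (LipV_fin dp (hfin gn0)).
apply: core_C => //; exact: dell.
Qed.

Section Fin.
Context {R : realType} {d n : nat} {Z : Type}.
Local Notation vec := 'cV[R]_d.
Variables (z : 'I_n -> Z) (ell : Z -> vec -> R).

Definition elem (bh : vec) s r : \bar R := ((n%:R^-1)%:E *
      \sum_(i < n) (iter s (fun e => LipV (grad (ell (z i))) * e) 1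
                     * ((l2 (grad (ell (z i)) bh)) ^+ r)%:E))%E.

Lemma B_ge (Lam : set R) (bh : R -> vec) s r lam : Lam lam ->
  (elem (bh lam) s r <= Bsr z ell Lam bh s r)%E.
Proof. by move=> Ll; apply: ereal_sup_ubound; exists lam. Qed.

Lemma elem0 bh r : elem bh 0 r = (n%:R^-1 * \sum_(i < n) l2 (grad (ell (z i)) bh) ^+ r)%:E.
Proof.
rewrite /elem /=; under eq_bigr do rewrite mul1e.
by rewrite sumEFin -EFinM.
Qed.

Lemma elem1 bh r : (0 < r)%N ->
  (forall i, l2 (grad (ell (z i)) bh) != 0 -> (LipV (grad (ell (z i))) < +oo)%E) ->
  elem bh 1 r = (n%:R^-1 * \sum_(i < n) fine (LipV (grad (ell (z i)))) * l2 (grad (ell (z i)) bh) ^+ r)%:E.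
Proof.
move=> r0 fin.
rewrite /elem /=.
rewrite (eq_bigr (fun i => (fine (LipV (grad (ell (z i)))) * l2 (grad (ell (z i)) bh) ^+ r)%:E)).
  by rewrite sumEFin -EFinM.
move=> i _; rewrite mule1.
have [g0|gn0] := eqVneq (l2 (grad (ell (z i)) bh)) 0.
  by rewrite g0 expr0n; case: r r0 => // r' _ /=; rewrite mule0 mulr0.
have dp : (0 < d)%N.
  rewrite lt0n; apply/eqP => d0; move/eqP: gn0; apply; exact: l2_dim0.
have ff : LipV (grad (ell (z i))) \is a fin_num.
  by rewrite ge0_fin_numE ?LipV_ge0 //; exact: fin.
by rewrite -{1}(fineK ff) EFinM.
Qed.

Lemma Bsr_dim0 (Lam : set R) (bh : R -> vec) s r l0 : d = 0%N -> Lam l0 ->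
  Bsr z ell Lam bh s r.+1 = 0%E.
Proof.
move=> d0 Ll.
have E lam : elem (bh lam) s r.+1 = 0%E.
  rewrite /elem big1 ?mule0 // => i _.
  by rewrite l2_dim0 // expr0n /= mule0.
apply/eqP; rewrite eq_le; apply/andP; split.
  by apply: ge_ereal_sup => x [lam _ <-]; rewrite -/(elem (bh lam) s r.+1) E.
by rewrite -(E l0); exact: B_ge.
Qed.

Lemma sum_ge_term (F : 'I_n -> \bar R) i : (forall j, 0 <= F j)%E -> (F i <= \sum_(j < n) F j)%E.
Proof. by move=> F0; rewrite (bigD1 i) //=; apply: leeDl; apply: sume_ge0. Qed.

Lemma fin_of_B (Lam : set R) (bh : R -> vec) lam : (0 < n)%N -> Lam lam ->
  (Bsr z ell Lam bh 1 3 < +oo)%E ->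
  forall i, l2 (grad (ell (z i)) (bh lam)) != 0 -> (LipV (grad (ell (z i))) < +oo)%E.
Proof.
move=> n0 Ll hB i gn0.
have dp : (0 < d)%N.
  rewrite lt0n; apply/eqP => d0; move/eqP: gn0; apply; exact: l2_dim0.
rewrite ltey; apply/negP => /eqP Linf.
have hE := @B_ge Lam bh 1 3 lam Ll.
pose F (j : 'I_n) := (iter 1 (fun e => LipV (grad (ell (z j))) * e) 1
                     * ((l2 (grad (ell (z j)) (bh lam))) ^+ 3)%:E)%E.
have T0 j : (0 <= F j)%E.
  by rewrite /F /= mule1; apply: mule_ge0; [exact: LipV_ge0|rewrite lee_fin exprn_ge0 // l2_ge0].
have Ti : F i = +oo%E.
  rewrite /F /= mule1 Linf gt0_mulye // lte_fin exprn_gt0 //.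
  by rewrite lt_def gn0 l2_ge0.
have S : (\sum_(j < n) F j = +oo)%E.
  apply/eqP; rewrite eq_le leey andTb -Ti; exact: sum_ge_term.
have : (elem (bh lam) 1 3 = +oo)%E.
  by rewrite /elem -/F S muleC gt0_mulye // lte_fin invr_gt0 ltr0n.
move=> E; rewrite E in hE.
by have := lt_le_trans hB hE; rewrite ltxx.
Qed.
End Fin.

Lemma final_alg {R : realType} (N C3 cm A B E F0 F1 F2 : R) : 0 < N -> 0 < cm -> 0 <= C3 ->
  N^-1 * A <= F0 -> N^-1 * B <= F1 -> N^-1 * E <= F2 ->
  N^-1 * (C3 * N^-1 ^+ 2 / (2 * cm ^+ 3) * A + C3 * N^-1 ^+ 3 / (2 * cm ^+ 4) * B
          + C3 ^+ 2 * N^-1 ^+ 4 / (8 * cm ^+ 6) * E) <=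
  C3 / N ^+ 2 * (F0 / (2 * cm ^+ 3) + F1 / (2 * N * cm ^+ 4) + C3 * F2 / (8 * N ^+ 2 * cm ^+ 6)).
Proof.
move=> N0 cm0 C0 hA hB hE.
have -> : N^-1 * (C3 * N^-1 ^+ 2 / (2 * cm ^+ 3) * A + C3 * N^-1 ^+ 3 / (2 * cm ^+ 4) * B
          + C3 ^+ 2 * N^-1 ^+ 4 / (8 * cm ^+ 6) * E) =
  C3 / N ^+ 2 * ((N^-1 * A) / (2 * cm ^+ 3) + (N^-1 * B) / (2 * N * cm ^+ 4)
     + C3 * (N^-1 * E) / (8 * N ^+ 2 * cm ^+ 6)).
  by field; rewrite !gt_eqF // ?exprn_gt0 // ?mulr_gt0 ?exprn_gt0.
have iN : 0 < N^-1 by rewrite invr_gt0.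
apply: ler_wpM2l; first by apply: divr_ge0 => //; apply/ltW/exprn_gt0.
apply: lerD; first apply: lerD.
- by apply: ler_wpM2r => //; rewrite invr_ge0 mulr_ge0 // ?exprn_ge0 // ltW.
- apply: ler_wpM2r => //; rewrite invr_ge0 mulr_ge0 // ?exprn_ge0 ?mulr_ge0 // ltW //.
- apply: ler_wpM2r; first by rewrite invr_ge0 mulr_ge0 // ?exprn_ge0 ?mulr_ge0 // ltW.
  exact: ler_wpM2l.
Qed.

Unset Implicit Arguments.
Theorem theorem6 (R : realType) (d n : nat) (Z : Type)
  (z : 'I_n -> Z) (ell : Z -> 'cV[R]_d -> R) (pi : 'cV[R]_d -> R)
  (Lam : set R) (betahat : R -> 'cV[R]_d)
  (betam betaprox : 'I_n -> R -> 'cV[R]_d) (cm C3 : R) :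
  (0 < n)%N ->
  Lam `<=` [set x | 0 <= x] -> Lam 0 ->
  (forall zz x, differentiable (ell zz) x) ->
  (forall zz x, differentiable (grad (ell zz)) x) ->
  (forall lam, Lam lam -> is_argmin (mPn z ell pi lam) (betahat lam)) ->
  (forall i lam, Lam lam -> is_argmin (mPm z ell pi i lam) (betam i lam)) ->
  (forall i lam, Lam lam ->
     is_argmin (prox_obj z ell pi (betahat lam) i lam) (betaprox i lam)) ->
  convex_fun pi ->
  0 < cm ->
  (forall i lam, Lam lam ->
     grad_growth (fun r => cm * r ^+ 2) (mPm z ell pi i lam)) ->
  (forall i, (LipM (hess (lossPm z ell i)) <= C3%:E)%E) ->
  (Bsr z ell Lam betahat 0 3 < +oo)%E ->
  (Bsr z ell Lam betahat 1 3 < +oo)%E ->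
  (Bsr z ell Lam betahat 1 4 < +oo)%E ->
  forall lam, Lam lam ->
    `|ProxACV z ell betaprox lam - CV z ell betam lam| <=
      C3 / (n%:R ^+ 2) *
      (fine (Bsr z ell Lam betahat 0 3) / (2 * cm ^+ 3)
       + fine (Bsr z ell Lam betahat 1 3) / (2 * n%:R * cm ^+ 4)
       + C3 * fine (Bsr z ell Lam betahat 1 4) / (8 * n%:R ^+ 2 * cm ^+ 6)).
Proof.
move=> n0 LamS Lam0 dell dgell hmh hmm hmp cpi cm0 hgr hLM hB03 hB13 hB14 lam Llam.
have l0 : 0 <= lam := LamS lam Llam.
have nR : 0 < n%:R :> R by rewrite ltr0n.
have [C0|Cn] := leP 0 C3; last first.
  have d0 : d = 0%N.
    apply/eqP; rewrite -leqn0 leqNgt; apply/negP => dp.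
    have := le_trans (LipM_ge0 (hess (lossPm z ell (Ordinal n0))) dp) (hLM (Ordinal n0)).
    by rewrite lee_fin leNgt Cn.
  have e : forall i, betaprox i lam = betam i lam by move=> i; exact: dim0_eq.
  have B0 s r : Bsr z ell Lam betahat s r.+1 = 0%E by exact: (Bsr_dim0 z ell betahat s r d0 Lam0).
  rewrite !B0 /= !mul0r mulr0 !addr0 mul0r addr0 mulr0.
  rewrite /ProxACV /CV (eq_bigr (fun i => ell (z i) (betam i lam))); last by move=> i _; rewrite e.
  by rewrite subrr normr0.
pose k : R := n%:R^-1.
have k0 : 0 < k by rewrite /k invr_gt0.
have fin i := @fin_of_B R d n Z z ell Lam betahat lam n0 Llam hB13 i.
have per i := per_i (i := i) n0 l0 cm0 C0 cpi dell dgell (hmh lam Llam) (hmm i lam Llam)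
   (hmp i lam Llam) (hgr i lam Llam) (hgr i 0 Lam0) (hLM i) (fin i).
set g := fun i => l2 (grad (ell (z i)) (betahat lam)).
set Lp := fun i => fine (LipV (grad (ell (z i)))).
set c1 := C3 * k ^+ 2 / (2 * cm ^+ 3).
set c2 := C3 * k ^+ 3 / (2 * cm ^+ 4).
set c3 := C3 ^+ 2 * k ^+ 4 / (8 * cm ^+ 6).
have per' i : `|ell (z i) (betaprox i lam) - ell (z i) (betam i lam)| <=
    c1 * g i ^+ 3 + c2 * (Lp i * g i ^+ 3) + c3 * (Lp i * g i ^+ 4).
  apply: le_trans (per i) _; rewrite -/k -/(g i) -/(Lp i).
  move: (g i) (Lp i) => a b.
  by rewrite /c1 /c2 /c3 le_eqVlt; apply/orP; left; apply/eqP; ring.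
have h0 : k * \sum_i g i ^+ 3 <= fine (Bsr z ell Lam betahat 0 3).
  apply: fine_ge hB03; rewrite -elem0; exact: B_ge.
have h1 : k * \sum_i Lp i * g i ^+ 3 <= fine (Bsr z ell Lam betahat 1 3).
  apply: fine_ge hB13; rewrite -elem1 //; exact: B_ge.
have h2 : k * \sum_i Lp i * g i ^+ 4 <= fine (Bsr z ell Lam betahat 1 4).
  apply: fine_ge hB14; rewrite -elem1 //; exact: B_ge.
have LHS : `|ProxACV z ell betaprox lam - CV z ell betam lam| <=
   k * (c1 * \sum_i g i ^+ 3 + c2 * \sum_i Lp i * g i ^+ 3 + c3 * \sum_i Lp i * g i ^+ 4).
  rewrite /ProxACV /CV -/k -mulrBr -sumrB normrM (ger0_norm (ltW k0)).
  apply: ler_wpM2l; first exact: ltW.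
  apply: le_trans (ler_norm_sum _ _ _) _.
  rewrite !mulr_sumr -!big_split /=.
  by apply: ler_sum => i _; exact: per' i.
apply: le_trans LHS _.
exact: final_alg.
Qed.
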